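(* Let $(\mathcal{U},f,g,\preccurlyeq)$ be a fault-tolerance partially ordered $(m,n)$-semiring as described in the context, let $k,t$ be positive integers with $k<m$, $t<n$, and let $x_1,\ldots,x_m,y_1,\ldots,y_m,z_1,\ldots,z_n,u_1,\ldots,u_n\in\mathcal{U}$ be disjoint components. (i) If $f(\underbrace{\mathbf{0},\ldots,\mathbf{0}}_{m-k},\underbrace{f(x_1^m),\ldots,f(x_1^m)}_{k})\preccurlyeq f(y_1^m)$, then $f(x_1^m)\preccurlyeq f(y_1^m)$. (ii) If $g(z_1^n)\preccurlyeq g(\underbrace{\mathbf{1},\ldots,\mathbf{1}}_{n-t},\underbrace{g(u_1^n),\ldots,g(u_1^n)}_{t})$, then $g(z_1^n)\preccurlyeq g(u_1^n)$.
   Context: Notation: $x_i^j$ denotes $x_i,\ldots,x_j$. $(\mathcal{U},f,g)$ is an $(m,n)$-semiring: $f$ is an associative $m$-ary and $g$ an associative $n$-ary operation on $\mathcal{U}$ (associativity of a $k$-ary $h$: $h(x_1^{i-1},h(x_i^{k+i-1}),x_{k+i}^{2k-1})=h(x_1^{j-1},h(x_j^{k+j-1}),x_{k+j}^{2k-1})$ for $1\le i\le j\le k$), and $g$ distributes over $f$ in every position. $\mathcal{U}$ is interpreted as a set of systems; $f(x_1^m)$ is the system that fails when any $x_i$ fails, $g(y_1^n)$ the system that fails only when all $y_j$ fail; elements are assumed to be disjoint components (failing independently), which imposes no further algebraic condition. $\mathbf{0}\in\mathcal{U}$ (the always-up system) is an $f$-identity ($f(\mathbf{0},\ldots,x,\ldots,\mathbf{0})=x$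 in every position) and $\mathbf{1}$ (the always-down system) is a $g$-identity; moreover $g(y_1^{j-1},\mathbf{0},y_{j+1}^n)=\mathbf{0}$ and $f(x_1^{i-1},\mathbf{1},x_{i+1}^m)=\mathbf{1}$ for all arguments and positions. $\preccurlyeq$ is a partial order on $\mathcal{U}$ (''fault-tolerance partial order'') such that $(\mathcal{U},f,g,\preccurlyeq)$ is a partially ordered $(m,n)$-semiring: $a\preccurlyeq b$ implies $f(x_1^{i-1},a,x_{i+1}^m)\preccurlyeq f(x_1^{i-1},b,x_{i+1}^m)$ and $g(y_1^{j-1},a,y_{j+1}^n)\preccurlyeq g(y_1^{j-1},b,y_{j+1}^n)$ for all arguments and all positions; and $\mathbf{0}\preccurlyeq a\preccurlyeq\mathbf{1}$ for all $a\in\mathcal{U}$. *)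

(* Defs.v *)
(* m-ary operations are modelled as functions on
   sequences, only ever applied to / constrained on sequences of length m. *)
From mathcomp Require Import all_boot.
Set Implicit Arguments. Unset Strict Implicit. Unset Printing Implicit Defensive.

Section Defs.
Variable U : Type.

(* h(x_1^{i}, h(x_{i+1}^{i+k}), x_{i+k+1}^{2k-1})  (0-indexed position i) *)
Definition inner_at (k : nat) (h : seq U -> U) (xs : seq U) (i : nat) : seq U :=
  take i xs ++ h (take k (drop i xs)) :: drop (i + k) xs.

Definition nary_assoc (k : nat) (h : seq U -> U) : Prop :=
  forall xs : seq U, size xs = (2 * k - 1)%N ->
  forall i j : nat, (i <= j)%N -> (j < k)%N ->
    h (inner_at k h xs i) = h (inner_at k h xs j).

Definition nary_distr (m n : nat) (f g : seq U -> U) : Prop :=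
  forall (a0 : U) (ys : seq U) (xs : seq U) (j : nat),
    size ys = n -> size xs = m -> (j < n)%N ->
    g (set_nth a0 ys j (f xs)) = f [seq g (set_nth a0 ys j x) | x <- xs].

Definition nary_identity (k : nat) (h : seq U -> U) (e : U) : Prop :=
  forall (x : U) (i : nat), (i < k)%N -> h (set_nth e (nseq k e) i x) = x.

Definition nary_absorbing (k : nat) (h : seq U -> U) (z : U) : Prop :=
  forall (xs : seq U) (i : nat), size xs = k -> (i < k)%N ->
    h (set_nth z xs i z) = z.

Definition partial_order (le : U -> U -> Prop) : Prop :=
  (forall a, le a a) /\ (forall a b, le a b -> le b a -> a = b) /\
  (forall a b c, le a b -> le b c -> le a c).

Definition nary_monotone (k : nat) (h : seq U -> U) (le : U -> U -> Prop) : Prop :=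
  forall (xs : seq U) (i : nat) (a b : U), size xs = k -> (i < k)%N ->
    le a b -> le (h (set_nth a xs i a)) (h (set_nth b xs i b)).

(* (U, f, g, le) is a fault-tolerance partially ordered (m,n)-semiring
   with distinguished elements zero (always-up) and one (always-down) *)
Definition ft_po_semiring (m n : nat) (f g : seq U -> U)
    (le : U -> U -> Prop) (zero one : U) : Prop :=
  nary_assoc m f /\ nary_assoc n g /\ nary_distr m n f g /\
  nary_identity m f zero /\ nary_identity n g one /\
  nary_absorbing n g zero /\ nary_absorbing m f one /\
  partial_order le /\
  nary_monotone m f le /\ nary_monotone n g le /\
  (forall a, le zero a /\ le a one).

End Defs.

(* Main.v *)
Require Import Defs.
From mathcomp Require Import all_boot.
From mathcomp Require Import zify.

Lemma set_nth_def (U : Type) (x x' : U) (s : seq U) i y :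
  (i < size s)%N -> set_nth x s i y = set_nth x' s i y.
Proof.
elim: s i => [|a s IH] [|i] //= H; by rewrite IH.
Qed.

Section Mono.
Variables (U : Type) (k : nat) (h : seq U -> U) (le : U -> U -> Prop).
Hypothesis Hpo : partial_order le.
Hypothesis Hm : nary_monotone k h le.

Lemma pw_mono (d : U) (a b : seq U) : size a = k -> size b = k ->
  (forall i, (i < k)%N -> le (nth d a i) (nth d b i)) -> le (h a) (h b).
Proof.
move=> Ha Hb Hab.
case: Hpo => Hr [_ Ht].
pose c j := mkseq (fun i => if (i < j)%N then nth d b i else nth d a i) k.
have Hc : forall j, size (c j) = k by move=> j; rewrite size_mkseq.
have c0 : c 0 = a.
  apply: (@eq_from_nth _ d); first by rewrite Hc Ha.
  by move=> i; rewrite Hc => Hi; rewrite nth_mkseq.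
have ck : c k = b.
  apply: (@eq_from_nth _ d); first by rewrite Hc Hb.
  by move=> i; rewrite Hc => Hi; rewrite nth_mkseq // Hi.
suff: forall j, (j <= k)%N -> le (h a) (h (c j)) by move=> /(_ k (leqnn k)); rewrite ck.
elim=> [|j IH] Hj; first by rewrite c0.
have Hjk : (j < k)%N by [].
apply: Ht (IH (ltnW Hj)) _.
have E1 : c j = set_nth (nth d a j) (c j) j (nth d a j).
  rewrite -(@set_nth_def _ d); last by rewrite Hc.
  apply: (@eq_from_nth _ d); first by rewrite size_set_nth Hc (maxn_idPr Hjk).
  move=> i; rewrite Hc => Hi; rewrite nth_set_nth /=.
  case: eqP => [->|_] //; by rewrite nth_mkseq // ltnn.
have E2 : c j.+1 = set_nth (nth d b j) (c j) j (nth d b j).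
  rewrite -(@set_nth_def _ d); last by rewrite Hc.
  apply: (@eq_from_nth _ d); first by rewrite size_set_nth !Hc (maxn_idPr Hjk).
  move=> i; rewrite Hc => Hi; rewrite nth_set_nth /=.
  case: eqP => [->|/eqP ne]; first by rewrite nth_mkseq // ltnSn.
  rewrite !nth_mkseq // ltnS leq_eqVlt.
  by rewrite (negbTE ne).
rewrite [X in le (h X) _]E1 E2; apply: Hm => //; exact: Hab.
Qed.
End Mono.

Theorem corollary4 (U : Type) (m n : nat) (f g : seq U -> U)
    (le : U -> U -> Prop) (zero one : U)
    (HS : ft_po_semiring m n f g le zero one)
    (k t : nat) (hk0 : (0 < k)%N) (hkm : (k < m)%N)
    (ht0 : (0 < t)%N) (htn : (t < n)%N)
    (xs ys zs us : seq U)
    (hx : size xs = m) (hy : size ys = m) (hz : size zs = n) (hu : size us = n) :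
  (le (f (nseq (m - k) zero ++ nseq k (f xs))) (f ys) -> le (f xs) (f ys)) /\
  (le (g zs) (g (nseq (n - t) one ++ nseq t (g us))) -> le (g zs) (g us)).
Proof.
case: HS => _ [_ [_ [If [Ig [_ [_ [Hpo [Mf [Mg Hb]]]]]]]]].
have Hpo' := Hpo; case: Hpo' => Hr [_ Ht].
split=> H.
- apply: Ht H.
  rewrite -{1}(If (f xs) (m - k)); last by lia.
  apply: (@pw_mono _ m f le Hpo Mf zero).
  + by rewrite size_set_nth size_nseq; lia.
  + by rewrite size_cat !size_nseq; lia.
  move=> i Hi; rewrite nth_set_nth /= nth_nseq Hi nth_cat size_nseq.
  case: eqP => [->|_].
    rewrite ltnn subnn nth_nseq hk0; exact: Hr.
  by apply: (proj1 (Hb _)).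
- apply: Ht H _.
  rewrite -{2}(Ig (g us) (n - t)); last by lia.
  apply: (@pw_mono _ n g le Hpo Mg one).
  + by rewrite size_cat !size_nseq; lia.
  + by rewrite size_set_nth size_nseq; lia.
  move=> i Hi; rewrite nth_set_nth /= nth_nseq Hi nth_cat size_nseq.
  case: eqP => [->|_].
    rewrite ltnn subnn nth_nseq ht0; exact: Hr.
  by apply: (proj2 (Hb _)).
Qed.
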